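(* Let $\mathcal{F}$ satisfy the standard conditions. If $A:\mathbb{N}\to\mathbb{Q}$ is an $\mathcal{F}$-sequence with $A(x)\neq0$ for all $x$, then $1/A$ is an $\mathcal{F}$-sequence.
   Context: $\mathbb{N}=\{0,1,2,\dots\}$. $\mathcal{F}$ is a set of functions $\mathbb{N}^n\to\mathbb{N}$ ($n\ge0$). It satisfies the standard conditions if it contains the zero function $Z(x)=0$, the successor $S(x)=x+1$, all projections $P^n_i(x_1,\dots,x_n)=x_i$, addition, multiplication and modified subtraction $x\dot- y=\max(x-y,0)$, and is closed under composition. An $\mathcal{F}$-sequence is a function $A:\mathbb{N}\to\mathbb{Q}$ of the form $A(x)=\frac{f(x)-g(x)}{h(x)+1}$ with $f,g,h:\mathbb{N}\to\mathbb{N}$ in $\mathcal{F}$. *)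

(* Defs.v *)
From mathcomp Require Import all_boot all_order all_algebra.
Set Implicit Arguments. Unset Strict Implicit. Unset Printing Implicit Defensive.
Import GRing.Theory Num.Theory.

(* A function N^n -> N is represented as a map ('I_n -> nat) -> nat
   (an argument vector x = (x_0,...,x_{n-1})).
   A class of functions is a predicate on all arities. *)
Definition fclass := forall n : nat, (('I_n -> nat) -> nat) -> Prop.

Definition Zf : ('I_1 -> nat) -> nat := fun _ => 0%N.
Definition Sf : ('I_1 -> nat) -> nat := fun x => (x ord0).+1.
Definition Proj (n : nat) (i : 'I_n) : ('I_n -> nat) -> nat := fun x => x i.
Definition arg0 : 'I_2 := ord0.
Definition arg1 : 'I_2 := ord_max.
Definition Addf : ('I_2 -> nat) -> nat := fun x => (x arg0 + x arg1)%N.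
Definition Mulf : ('I_2 -> nat) -> nat := fun x => (x arg0 * x arg1)%N.
(* Modified subtraction x -' y = max(x - y, 0): ssrnat's truncated subn. *)
Definition Subf : ('I_2 -> nat) -> nat := fun x => (x arg0 - x arg1)%N.

Definition compose (m n : nat) (f : ('I_m -> nat) -> nat)
  (g : 'I_m -> ('I_n -> nat) -> nat) : ('I_n -> nat) -> nat :=
  fun x => f (fun i => g i x).

Definition standard_conditions (F : fclass) : Prop :=
  F 1 Zf /\ F 1 Sf /\ (forall n (i : 'I_n), F n (Proj i)) /\
      F 2 Addf /\ F 2 Mulf /\ F 2 Subf /\
      (forall m n (f : ('I_m -> nat) -> nat) (g : 'I_m -> ('I_n -> nat) -> nat),
          F m f -> (forall i, F n (g i)) -> F n (compose f g)).

Definition unary (f : nat -> nat) : ('I_1 -> nat) -> nat := fun x => f (x ord0).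

Definition in_F1 (F : fclass) (f : nat -> nat) : Prop := F 1 (unary f).

Definition F_sequence (F : fclass) (A : nat -> rat) : Prop :=
  exists f g h : nat -> nat,
    [/\ in_F1 F f, in_F1 F g, in_F1 F h &
        forall x, A x = (((f x)%:R - (g x)%:R) / ((h x)%:R + 1))%R].

(* Main.v *)
Require Import Defs.
From mathcomp Require Import all_boot all_order all_algebra zify ring lra.
Import GRing.Theory Num.Theory.
Local Open Scope ring_scope.

Section Cl.
Variable F : fclass.
Hypothesis HF : standard_conditions F.

Definition pick2 (u v : nat -> nat) : 'I_2 -> ('I_1 -> nat) -> nat :=
  fun i => if val i == 0%N then unary u else unary v.

Lemma pick2_F u v : in_F1 F u -> in_F1 F v -> forall i, F 1 (pick2 u v i).
Proof. by move=> Hu Hv i; rewrite /pick2; case: ifP. Qed.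

Lemma F1_add u v : in_F1 F u -> in_F1 F v -> in_F1 F (fun x => u x + v x)%N.
Proof.
case: HF => [_ [_ [_ [Ha [Hm [Hs Hc]]]]]] Hu Hv.
exact (Hc 2%N 1%N Addf (pick2 u v) Ha (@pick2_F u v Hu Hv)).
Qed.
Lemma F1_mul u v : in_F1 F u -> in_F1 F v -> in_F1 F (fun x => u x * v x)%N.
Proof.
case: HF => [_ [_ [_ [Ha [Hm [Hs Hc]]]]]] Hu Hv.
exact (Hc 2%N 1%N Mulf (pick2 u v) Hm (@pick2_F u v Hu Hv)).
Qed.
Lemma F1_sub u v : in_F1 F u -> in_F1 F v -> in_F1 F (fun x => u x - v x)%N.
Proof.
case: HF => [_ [_ [_ [Ha [Hm [Hs Hc]]]]]] Hu Hv.
exact (Hc 2%N 1%N Subf (pick2 u v) Hs (@pick2_F u v Hu Hv)).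
Qed.
Lemma F1_one : in_F1 F (fun _ => 1%N).
Proof.
case: HF => [Hz [HS [_ [Ha [Hm [Hs Hc]]]]]].
exact (Hc 1%N 1%N Sf (fun _ => Zf) HS (fun _ => Hz)).
Qed.
End Cl.

Theorem mainTheorem10 (F : fclass) (A : nat -> rat) :
  standard_conditions F -> F_sequence F A -> (forall x, A x != 0) ->
  F_sequence F (fun x => (A x)^-1).
Proof.
move=> HF [f [g [h [Hf Hg Hh HA]]]] Hnz.
pose sg (a : nat) := (1 - (1 - a))%N.
pose p x := (f x - g x)%N. pose q x := (g x - f x)%N.
have Hp : in_F1 F p by apply: F1_sub.
have Hq : in_F1 F q by apply: F1_sub.
have H1 := @F1_one F HF.
have Hh1 : in_F1 F (fun x => h x + 1)%N by apply: F1_add.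
have Hsg : forall u, in_F1 F u -> in_F1 F (fun x => sg (u x)).
  by move=> u Hu; apply: F1_sub => //; apply: F1_sub.
exists (fun x => (h x + 1) * sg (p x))%N, (fun x => (h x + 1) * sg (q x))%N,
  (fun x => p x + q x - 1)%N; split.
- by apply: F1_mul => //; apply: Hsg.
- by apply: F1_mul => //; apply: Hsg.
- by apply: F1_sub => //; apply: F1_add.
have Hn : forall n : nat, (n%:R + 1 : rat) != 0 by move=> n; rewrite natr1 pnatr_eq0.
move=> x; rewrite HA; have := Hnz x; rewrite HA /p /q /sg.
case: (ltngtP (f x) (g x)) => Hfg.
- have [d ->] : exists d, g x = (f x + d.+1)%N by exists (g x - f x).-1; lia.
  move=> _.
  have -> : (f x - (f x + d.+1) = 0)%N by lia.
  have -> : ((f x + d.+1) - f x = d.+1)%N by lia.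
  have -> : (0 + d.+1 - 1 = d)%N by lia.
  rewrite /= muln0 muln1 natrD -addn1 natrD.
  by field; rewrite !Hn /= opprD addrA subrr sub0r oppr_eq0 Hn.
- have [d ->] : exists d, f x = (g x + d.+1)%N by exists (f x - g x).-1; lia.
  move=> _.
  have -> : (g x - (g x + d.+1) = 0)%N by lia.
  have -> : ((g x + d.+1) - g x = d.+1)%N by lia.
  have -> : (d.+1 + 0 - 1 = d)%N by lia.
  rewrite /= muln0 muln1 natrD -addn1 natrD.
  by field; rewrite !Hn.
- by rewrite Hfg subrr mul0r eqxx.
Qed.
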